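(* $\mathrm{Log}_{>1}(\mathbb{R})$ does not have the finite model property: there is a modal formula that is not in $\mathrm{Log}_{>1}(\mathbb{R})$ but is valid in every finite frame in which all formulas of $\mathrm{Log}_{>1}(\mathbb{R})$ are valid.
   Context: Modal formulas are built from a countable set of propositional variables using $\bot$, $\to$ and one unary modality $\lozenge$. A frame is a pair $(X,R)$; a valuation assigns subsets of $X$ to variables; $x\models\lozenge\varphi$ iff there is $y$ with $xRy$ and $y\models\varphi$. A formula is valid in a frame if true at every point under every valuation. $\mathrm{Log}_{>1}(\mathbb{R})$ is the set of formulas valid in the frame $(\mathbb{R},R_{>1})$ with $xR_{>1}y$ iff $|x-y|>1$. A logic $L$ has the finite model property if it is the set of formulas valid in some class of finite frames (equivalently, in the class of all finite frames validating $L$). *)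

(* Defs.v *)
From Stdlib Require Import Reals List.
Open Scope R_scope.

Inductive form : Type :=
  | Var : nat -> form
  | Bot : form
  | Imp : form -> form -> form
  | Dia : form -> form.

Fixpoint sat {X : Type} (Rel : X -> X -> Prop) (V : nat -> X -> Prop)
    (x : X) (f : form) : Prop :=
  match f with
  | Var n => V n x
  | Bot => False
  | Imp a b => sat Rel V x a -> sat Rel V x b
  | Dia a => exists y, Rel x y /\ sat Rel V y a
  end.

Definition valid {X : Type} (Rel : X -> X -> Prop) (f : form) : Prop :=
  forall (V : nat -> X -> Prop) (x : X), sat Rel V x f.

Definition R_gt1 (x y : R) : Prop := Rabs (x - y) > 1.

Definition Log_gt1_R (f : form) : Prop := valid R_gt1 f.

Definition finite_type (X : Type) : Prop := exists l : list X, forall x : X, In x l.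

(* Main.v *)
Require Import Defs.
From Stdlib Require Import Reals List Lra Lia Classical ClassicalEpsilon.
Open Scope R_scope.

Definition Neg a := Imp a Bot.
Definition Top := Imp Bot Bot.
Definition And a b := Neg (Imp a (Neg b)).
Definition Or a b := Imp (Neg a) b.
Definition Box a := Neg (Dia (Neg a)).
Definition Box2 a := Box (Box a).
Definition Dia2 a := Dia (Dia a).
Fixpoint Conj (l : list form) : form :=
  match l with nil => Top | a :: r => And a (Conj r) end.
Fixpoint Disj (l : list form) : form :=
  match l with nil => Bot | a :: r => Or a (Disj r) end.

Section Sem.
Variables (X : Type) (Rel : X -> X -> Prop) (V : nat -> X -> Prop).

Lemma sat_Neg x a : sat Rel V x (Neg a) <-> ~ sat Rel V x a.
Proof. simpl; tauto. Qed.
Lemma sat_And x a b : sat Rel V x (And a b) <-> sat Rel V x a /\ sat Rel V x b.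
Proof. simpl. split. intro H. destruct (classic (sat Rel V x a)), (classic (sat Rel V x b)); tauto. tauto. Qed.
Lemma sat_Or x a b : sat Rel V x (Or a b) <-> sat Rel V x a \/ sat Rel V x b.
Proof. simpl. split. intro H. destruct (classic (sat Rel V x a)); tauto. tauto. Qed.
Lemma sat_Box x a : sat Rel V x (Box a) <-> forall y, Rel x y -> sat Rel V y a.
Proof. simpl. split.
 - intros H y Hy. destruct (classic (sat Rel V y a)); auto. exfalso; apply H; eauto.
 - intros H [y [Hy Hn]]. apply Hn; auto. Qed.
Lemma sat_Conj x l : sat Rel V x (Conj l) <-> forall f, In f l -> sat Rel V x f.
Proof. induction l; simpl Conj. - simpl; tauto.
 - rewrite sat_And, IHl. simpl. split. intros [H1 H2] f [<-|Hf]; auto.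
   intros H; split; auto. Qed.
Lemma sat_Disj x l : sat Rel V x (Disj l) <-> exists f, In f l /\ sat Rel V x f.
Proof. induction l; simpl Disj. - simpl. split; [tauto| intros [f [[] _]]].
 - rewrite sat_Or, IHl. simpl. split. intros [H|[f [H1 H2]]]; eauto.
   intros [f [[<-|H1] H2]]; eauto. Qed.
End Sem.

Lemma gt1_iff x y : R_gt1 x y <-> x - y > 1 \/ y - x > 1.
Proof. unfold R_gt1, Rabs. destruct (Rcase_abs (x - y)); split; intro H.
 right; lra. destruct H; lra. left; lra. destruct H; lra. Qed.
Lemma ngt1_iff x y : ~ R_gt1 x y <-> x - y <= 1 /\ y - x <= 1.
Proof. rewrite gt1_iff. split.
 - intro H; split; apply Rnot_lt_le; intro; apply H; [left|right]; lra.
 - intros [H1 H2] [H|H]; lra. Qed.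

Lemma R_Box2 V x a : sat R_gt1 V x (Box2 a) <-> forall z, sat R_gt1 V z a.
Proof. unfold Box2. rewrite sat_Box. split.
 - intros H z. set (y := Rabs x + Rabs z + 2).
   assert (Hx : R_gt1 x y). { apply gt1_iff; right. unfold y.
     pose proof (Rle_abs x); pose proof (Rabs_pos z); lra. }
   specialize (H y Hx). rewrite sat_Box in H. apply H. apply gt1_iff; left. unfold y.
     pose proof (Rle_abs z); pose proof (Rabs_pos x); lra.
 - intros H y _. rewrite sat_Box. auto. Qed.
Lemma R_Dia2 V x a : sat R_gt1 V x (Dia2 a) <-> exists z, sat R_gt1 V z a.
Proof. split.
 - simpl. intros [y [_ [z [_ H]]]]; eauto.
 - intros [z Hz]. set (y := Rabs x + Rabs z + 2). simpl. exists y. split.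
   apply gt1_iff; right. unfold y. pose proof (Rle_abs x); pose proof (Rabs_pos z); lra.
   exists z. split; auto. apply gt1_iff; left. unfold y.
     pose proof (Rle_abs z); pose proof (Rabs_pos x); lra. Qed.

Definition reflV (V : nat -> R -> Prop) : nat -> R -> Prop := fun n x => V n (- x).
Lemma sat_refl V f : forall x, sat R_gt1 (reflV V) x f <-> sat R_gt1 V (- x) f.
Proof. induction f; intro x; simpl; try tauto.
 - rewrite IHf1, IHf2; tauto.
 - split.
   + intros [y [Hy H]]. exists (- y). split. unfold R_gt1 in *.
     replace (- x - - y) with (- (x - y)) by ring. rewrite Rabs_Ropp; auto.
     apply IHf; auto.
   + intros [y [Hy H]]. exists (- y). split. unfold R_gt1 in *.
     replace (x - - y) with (- (- x - y)) by ring. rewrite Rabs_Ropp; auto.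
     apply IHf. rewrite Ropp_involutive; auto. Qed.
Open Scope R_scope.

Definition T0f := And (Box (Neg (Var 0))) (Dia (Var 1)).
Definition stepf (B A : form) := And (And (Box (Neg B)) (Neg B)) (Dia A).
Fixpoint Tf (k : nat) : form :=
  match k with
  | O => Var 0
  | S k' => match k' with
            | O => T0f
            | S k'' => stepf (Tf k') (Tf k'')
            end
  end.

Lemma Tf1_sem V x : sat R_gt1 V x (Tf 1) <->
  (forall y, V 0%nat y -> ~ R_gt1 x y) /\ exists y, R_gt1 x y /\ V 1%nat y.
Proof. simpl Tf. unfold T0f. rewrite sat_And, sat_Box. simpl. split.
 - intros [H1 H2]. split; auto. intros y Hy Hr. exact (H1 y Hr Hy).
 - intros [H1 H2]. split; auto. intros y Hr Hy. exact (H1 y Hy Hr). Qed.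

Lemma TfSS_sem V k x : sat R_gt1 V x (Tf (S (S k))) <->
  (forall y, sat R_gt1 V y (Tf (S k)) -> ~ R_gt1 x y) /\ ~ sat R_gt1 V x (Tf (S k))
  /\ exists y, R_gt1 x y /\ sat R_gt1 V y (Tf k).
Proof. change (Tf (S (S k))) with (stepf (Tf (S k)) (Tf k)). unfold stepf.
 rewrite !sat_And, sat_Box, sat_Neg. simpl. split.
 - intros [[H1 H2] H3]. repeat split; auto. intros y Hy Hr. exact (H1 y Hr Hy).
 - intros [H1 [H2 H3]]. repeat split; auto. intros y Hr Hy. exact (H1 y Hy Hr). Qed.

Lemma NS_interval x v w : v < w -> (forall y, v < y <= w -> ~ R_gt1 x y) -> w - 1 <= x <= v + 1.
Proof. intros Hvw H. pose proof (H w ltac:(lra)) as Hw. apply ngt1_iff in Hw. split. lra.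
 apply Rnot_lt_le. intro Hx. destruct (Rle_dec (x - 1) w).
 - apply (H ((v + x - 1)/2)). lra. apply gt1_iff. left. lra.
 - apply (H w). lra. apply gt1_iff. left. lra. Qed.

Lemma step (A B C : R -> Prop) (u v : R) :
  u < v -> v < u + 1 ->
  (forall y, A y -> u <= y <= v) ->
  (forall e, e > 0 -> exists y, A y /\ y < u + e) ->
  (forall y, B y <-> v < y <= u + 1) ->
  (forall x, C x <-> (forall y, B y -> ~ R_gt1 x y) /\ ~ B x /\ exists y, R_gt1 x y /\ A y) ->
  forall x, C x <-> u + 1 < x <= v + 1.
Proof. intros Huv Hvu HA HAe HB HC x. rewrite HC. split.
 - intros [H1 [H2 [y [Hy Ay]]]].
   assert (Hb : u + 1 - 1 <= x <= v + 1).
   { apply NS_interval. lra. intros z Hz. apply H1. apply HB. lra. }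
   apply HA in Ay. apply gt1_iff in Hy. destruct Hy; lra.
 - intros Hx. split; [|split].
   + intros y Hy. apply HB in Hy. apply ngt1_iff. lra.
   + rewrite HB. lra.
   + destruct (HAe (x - 1 - u) ltac:(lra)) as [y [Ay Hy]]. exists y. split; auto.
     apply gt1_iff. left. lra. Qed.

Lemma glb_ex (P : R -> Prop) : (exists x, P x) -> (exists m, forall x, P x -> m <= x) ->
  exists g, (forall x, P x -> g <= x) /\ (forall m, (forall x, P x -> m <= x) -> m <= g).
Proof. intros [x0 Hx0] [m Hm].
 destruct (completeness (fun y => P (- y))) as [L [HL1 HL2]].
 - exists (- m). intros y Hy. specialize (Hm _ Hy). lra.
 - exists (- x0). rewrite Ropp_involutive. auto.
 - exists (- L). split.
   + intros x Hx. assert (x <= - L \/ - L <= x) by lra. destruct H; [|lra].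
     assert (HH: - x <= L). { apply HL1. rewrite Ropp_involutive; auto. } lra.
   + intros m' Hm'. assert (L <= - m'). { apply HL2. intros y Hy. specialize (Hm' _ Hy). lra. } lra.
Qed.

Lemma glb_approx (P : R -> Prop) g : (forall m, (forall x, P x -> m <= x) -> m <= g) ->
  forall e, e > 0 -> exists y, P y /\ y < g + e.
Proof. intros H e He. apply NNPP. intro Hn. assert (g + e <= g); [|lra].
 apply H. intros x Px. apply Rnot_lt_le. intro. apply Hn. eauto. Qed.
Open Scope R_scope.

Definition DS := Or (Var 0) (Var 1).
Definition alpha : form := Conj
  (Box2 (Imp DS (Box (Neg DS))) :: Dia2 (Var 0) :: Dia2 (Var 1) :: Dia2 (Tf 1)
   :: Box2 (Imp (Tf 1) (Box (Neg (Tf 1)))) :: Dia2 (Tf 2) :: nil).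

Definition AlphaHyps (V : nat -> R -> Prop) : Prop :=
  (forall y z, (V 0%nat y \/ V 1%nat y) -> (V 0%nat z \/ V 1%nat z) -> ~ R_gt1 y z) /\
  (exists z, V 0%nat z) /\ (exists z, V 1%nat z) /\
  (exists z, sat R_gt1 V z (Tf 1)) /\
  (forall y z, sat R_gt1 V y (Tf 1) -> sat R_gt1 V z (Tf 1) -> ~ R_gt1 y z) /\
  (exists z, sat R_gt1 V z (Tf 2)).

Lemma alpha_sem V x : sat R_gt1 V x alpha <-> AlphaHyps V.
Proof. unfold alpha, AlphaHyps. rewrite sat_Conj.
 assert (HDS : forall z, sat R_gt1 V z DS <-> V 0%nat z \/ V 1%nat z).
 { intro z. unfold DS. rewrite sat_Or. simpl. tauto. }
 split.
 - intro H.
   pose proof (H _ (or_introl eq_refl)) as H1. rewrite R_Box2 in H1.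
   pose proof (H _ (or_intror (or_introl eq_refl))) as H2. rewrite R_Dia2 in H2.
   pose proof (H _ (or_intror (or_intror (or_introl eq_refl)))) as H3. rewrite R_Dia2 in H3.
   pose proof (H _ (or_intror (or_intror (or_intror (or_introl eq_refl))))) as H4. rewrite R_Dia2 in H4.
   pose proof (H _ (or_intror (or_intror (or_intror (or_intror (or_introl eq_refl)))))) as H5. rewrite R_Box2 in H5.
   pose proof (H _ (or_intror (or_intror (or_intror (or_intror (or_intror (or_introl eq_refl))))))) as H6. rewrite R_Dia2 in H6.
   repeat split; auto.
   + intros y z Hy Hz Hr. specialize (H1 y). simpl in H1. rewrite <- HDS in Hy, Hz.
     specialize (H1 Hy). apply H1. exists z. split; [auto|]. intro HH; apply HH. intro HH2. apply HDS in Hz. destruct Hz; tauto.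
   + intros y z Hy Hz Hr. specialize (H5 y). specialize (H5 Hy).
     rewrite sat_Box in H5. apply (H5 z Hr). auto.
 - intros [H1 [H2 [H3 [H4 [H5 H6]]]]] f Hf.
   simpl in Hf. repeat destruct Hf as [<-|Hf]; try contradiction.
   + rewrite R_Box2. intro z. intro Hz. rewrite sat_Box. intros y Hr Hy.
     rewrite HDS in Hz, Hy. exact (H1 z y Hz Hy Hr).
   + rewrite R_Dia2; auto.
   + rewrite R_Dia2; auto.
   + rewrite R_Dia2; auto.
   + rewrite R_Box2. intro z. intro Hz. rewrite sat_Box. intros y Hr Hy.
     exact (H5 z y Hz Hy Hr).
   + rewrite R_Dia2; auto.
Qed.

Definition WalkConcl (V : nat -> R -> Prop) : Prop :=
  (forall k, exists x, sat R_gt1 V x (Tf (S k))) /\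
  (forall j k, (j < k)%nat -> forall x, sat R_gt1 V x (Tf (S j)) -> ~ sat R_gt1 V x (Tf (S k))).
Open Scope R_scope.

Section Walk.
Variables (b a : R).
Fixpoint u (k : nat) : R :=
  match k with
  | O => b
  | S k' => match k' with O => a + 1 | S k'' => u k'' + 1 end
  end.
End Walk.

Lemma walk_right V : AlphaHyps V ->
  (exists x y, sat R_gt1 V x (Tf 1) /\ V 1%nat y /\ x > y + 1) -> WalkConcl V.
Proof.
 intros [H1 [[d0 Hd0] [[s0 Hs0] [_ [H5 [x6 H6]]]]]] [x0 [y0 [Hx0 [Hy0 Hxy0]]]].
 destruct (glb_ex (V 1%nat)) as [a [Ha1 Ha2]]. eauto.
 { exists (s0 - 1). intros y Hy. pose proof (H1 y s0 (or_intror Hy) (or_intror Hs0)) as HH.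
   apply ngt1_iff in HH. lra. }
 destruct (glb_ex (V 0%nat)) as [b [Hb1 Hb2]]. eauto.
 { exists (s0 - 1). intros y Hy. pose proof (H1 y s0 (or_introl Hy) (or_intror Hs0)) as HH.
   apply ngt1_iff in HH. lra. }
 assert (F2 : forall z, V 0%nat z -> z <= a + 1).
 { intros z Hz. assert (z - 1 <= a); [|lra]. apply Ha2. intros y Hy.
   pose proof (H1 z y (or_introl Hz) (or_intror Hy)) as HH. apply ngt1_iff in HH. lra. }
 assert (F2' : forall y, V 1%nat y -> y <= b + 1).
 { intros y Hy. assert (y - 1 <= b); [|lra]. apply Hb2. intros z Hz.
   pose proof (H1 y z (or_intror Hy) (or_introl Hz)) as HH. apply ngt1_iff in HH. lra. }
 pose proof (glb_approx _ _ Ha2) as apS.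
 pose proof (glb_approx _ _ Hb2) as apD.
 assert (C1 : forall x, sat R_gt1 V x (Tf 1) -> x <= b + 1).
 { intros x Hx. apply Tf1_sem in Hx. destruct Hx as [Hx _]. assert (x - 1 <= b); [|lra].
   apply Hb2. intros z Hz. specialize (Hx z Hz). apply ngt1_iff in Hx. lra. }
 assert (Cab : a < b). { specialize (C1 _ Hx0). specialize (Ha1 _ Hy0). lra. }
 assert (C4 : forall x, a + 1 < x <= b + 1 -> sat R_gt1 V x (Tf 1)).
 { intros x Hx. apply Tf1_sem. split.
   - intros z Hz. apply ngt1_iff. specialize (Hb1 _ Hz). specialize (F2 _ Hz). lra.
   - destruct (apS (x - 1 - a) ltac:(lra)) as [y [Hy1 Hy2]]. exists y. split; auto.
     apply gt1_iff. left. lra. }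
 assert (C3 : forall x, sat R_gt1 V x (Tf 1) -> a + 1 < x).
 { intros x Hx. pose proof Hx as Hx'. apply Tf1_sem in Hx'. destruct Hx' as [_ [y [Hr Hy]]].
   apply gt1_iff in Hr. destruct Hr as [Hr|Hr].
   - specialize (Ha1 _ Hy). lra.
   - exfalso. apply (H5 x (b + 1) Hx (C4 (b + 1) ltac:(lra))). apply gt1_iff. right.
     specialize (F2' _ Hy). lra. }
 assert (T0e : forall x, sat R_gt1 V x (Tf 1) <-> a + 1 < x <= b + 1).
 { intro x. split. intro Hx. split; auto. apply C4. }
 assert (Cba : b < a + 1).
 { apply Rnot_le_lt. intro Hba. pose proof (Hb1 _ Hd0). pose proof (F2 _ Hd0).
   apply TfSS_sem in H6. destruct H6 as [Ha [Hb [z [Hz1 Hz2]]]].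
   assert (Hi : b + 1 - 1 <= x6 <= a + 1 + 1).
   { apply NS_interval. lra. intros y Hy. apply Ha. apply T0e. lra. }
   rewrite T0e in Hb. assert (x6 <= a + 1) by (destruct (Rle_dec x6 (a+1)); [auto| exfalso; apply Hb; lra]).
   pose proof (Hb1 _ Hz2). pose proof (F2 _ Hz2).
   apply gt1_iff in Hz1. destruct Hz1; lra. }
 set (uu := u b a).
 assert (P : forall k, uu k < uu (S k) < uu k + 1).
 { induction k. simpl. lra. destruct k; simpl in *; lra. }
 assert (uSS : forall k, uu (S (S k)) = uu k + 1). { intro k. reflexivity. }
 assert (Inv : forall k, (forall y, sat R_gt1 V y (Tf k) -> uu k <= y <= uu (S k)) /\
     (forall e, e > 0 -> exists y, sat R_gt1 V y (Tf k) /\ y < uu k + e) /\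
     (forall y, sat R_gt1 V y (Tf (S k)) <-> uu (S k) < y <= uu (S (S k)))).
 { induction k.
   - split; [|split].
     + intros y Hy. simpl in Hy. simpl. split; auto.
     + exact apD.
     + intro y. rewrite T0e. simpl. lra.
   - destruct IHk as [I1 [I2 I3]]. pose proof (P k) as Pk. pose proof (P (S k)) as PSk.
     split; [|split].
     + intros y Hy. apply I3 in Hy. lra.
     + intros e He. destruct (Rle_dec e (uu (S (S k)) - uu (S k))).
       * exists (uu (S k) + e / 2). split. apply I3. lra. lra.
       * exists (uu (S (S k))). split. apply I3. lra. lra.
     + intro y. rewrite (uSS (S k)).
       apply (step (fun y => sat R_gt1 V y (Tf k)) (fun y => sat R_gt1 V y (Tf (S k)))
                   (fun y => sat R_gt1 V y (Tf (S (S k)))) (uu k) (uu (S k))).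
       lra. lra. exact I1. exact I2. intro z. rewrite I3. rewrite uSS. tauto.
       intro x. apply TfSS_sem. }
 assert (Mono : forall m p : nat, uu m <= uu (p + m)%nat).
 { intros m p. induction p. simpl; lra. simpl plus. pose proof (P (p + m)%nat). lra. }
 split.
 - intro k. exists (uu (S (S k))). apply (Inv k). pose proof (P (S k)). lra.
 - intros j k Hjk x Hj Hk. apply (proj2 (proj2 (Inv j))) in Hj.
   apply (proj2 (proj2 (Inv k))) in Hk.
   pose proof (Mono (S (S j)) (k - S j)%nat) as M.
   replace (k - S j + S (S j))%nat with (S k) in M by lia. lra.
Qed.
Open Scope R_scope.

Lemma walk_all V x0 : sat R_gt1 V x0 alpha -> WalkConcl V.
Proof. intro Ha. pose proof Ha as Hh. apply alpha_sem in Hh.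
 destruct (classic (exists x y, sat R_gt1 V x (Tf 1) /\ V 1%nat y /\ x > y + 1)) as [Hc|Hc].
 - apply walk_right; auto.
 - assert (Hr : WalkConcl (reflV V)).
   { apply walk_right.
     - apply (alpha_sem _ (- x0)). apply sat_refl. rewrite Ropp_involutive. auto.
     - destruct Hh as [_ [_ [_ [[x Hx] _]]]]. pose proof Hx as Hx'.
       apply Tf1_sem in Hx'. destruct Hx' as [_ [y [Hr Hy]]].
       exists (- x), (- y). split; [|split].
       + apply sat_refl. rewrite Ropp_involutive; auto.
       + unfold reflV. rewrite Ropp_involutive; auto.
       + apply gt1_iff in Hr. destruct Hr as [Hr|Hr]; [|lra].
         exfalso. apply Hc. exists x, y. split; auto. split; auto. lra. }
   destruct Hr as [Hr1 Hr2]. split.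
   + intro k. destruct (Hr1 k) as [x Hx]. exists (- x). apply sat_refl in Hx. auto.
   + intros j k Hjk x Hj Hk. apply (Hr2 j k Hjk (- x)); apply sat_refl; rewrite Ropp_involutive; auto.
Qed.

Fixpoint good (f : form) : Prop :=
  match f with
  | Var k => (k < 2)%nat
  | Bot => True
  | Imp a b => good a /\ good b
  | Dia a => good a
  end.

Lemma good_Tf : forall k, good (Tf k) /\ good (Tf (S k)).
Proof. induction k. simpl. repeat split; lia.
 destruct IHk as [H1 H2]. split; auto. simpl Tf. simpl in *. tauto. Qed.

Definition q (i : nat) : form := Var (2 + i).
Definition Cover (n : nat) : form := Box2 (Disj (map q (seq 0 n))).
Definition PureI (i : nat) : form :=
  And (Or (Box2 (Imp (q i) (Var 0))) (Box2 (Imp (q i) (Neg (Var 0)))))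
      (Or (Box2 (Imp (q i) (Var 1))) (Box2 (Imp (q i) (Neg (Var 1))))).
Definition Pure (n : nat) : form := Conj (map PureI (seq 0 n)).
Definition HomIJ (i j : nat) : form :=
  Imp (Dia2 (And (q i) (Dia (q j)))) (Box2 (Imp (q i) (Dia (q j)))).
Definition Hom (n : nat) : form :=
  Conj (map (fun i => Conj (map (HomIJ i) (seq 0 n))) (seq 0 n)).
Definition body (n : nat) : form := And (Cover n) (And (Pure n) (And (Hom n) alpha)).
Definition psi (n : nat) : form := Neg (body n).

Lemma php : forall n (f : nat -> nat), (forall k, (k <= n)%nat -> (f k < n)%nat) ->
  (forall j k, (j < k)%nat -> (k <= n)%nat -> f j <> f k) -> False.
Proof. induction n; intros f Hf Hi.
 - specialize (Hf 0%nat ltac:(lia)). lia.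
 - remember (f (S n)) as c eqn:Ec.
   apply (IHn (fun k => if Nat.ltb (f k) c then f k else pred (f k))).
   + intros k Hk. pose proof (Hf k ltac:(lia)). pose proof (Hf (S n) ltac:(lia)). rewrite <- Ec in *.
     pose proof (Hi k (S n) ltac:(lia) ltac:(lia)). rewrite <- Ec in *.
     destruct (Nat.ltb_spec (f k) c); lia.
   + intros j k Hjk Hkn. pose proof (Hi j k Hjk ltac:(lia)).
     pose proof (Hi j (S n) ltac:(lia) ltac:(lia)). pose proof (Hi k (S n) ltac:(lia) ltac:(lia)). rewrite <- Ec in *.
     destruct (Nat.ltb_spec (f j) c), (Nat.ltb_spec (f k) c); lia.
Qed.

Lemma R_side n : Log_gt1_R (psi n).
Proof. intros V x Hb. unfold body in Hb. rewrite !sat_And in Hb.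
 destruct Hb as [Hc [Hp [Hh Ha]]].
 assert (Cov : forall z, exists i, (i < n)%nat /\ V (2 + i)%nat z).
 { intro z. unfold Cover in Hc. rewrite R_Box2 in Hc. specialize (Hc z).
   rewrite sat_Disj in Hc. destruct Hc as [f [Hf Hs]]. apply in_map_iff in Hf.
   destruct Hf as [i [<- Hi]]. apply in_seq in Hi. exists i. split. lia. exact Hs. }
 assert (Pu : forall i, (i < n)%nat -> forall v, (v < 2)%nat ->
    (forall z, V (2 + i)%nat z -> V v z) \/ (forall z, V (2 + i)%nat z -> ~ V v z)).
 { intros i Hi v Hv. unfold Pure in Hp. rewrite sat_Conj in Hp.
   specialize (Hp (PureI i) ltac:(apply in_map; apply in_seq; lia)).
   unfold PureI in Hp. rewrite sat_And, !sat_Or, !R_Box2 in Hp.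
   destruct v as [|[|v]]; [| |lia].
   - destruct Hp as [[H|H] _]; [left|right]; intros z Hz; apply (H z); auto.
   - destruct Hp as [_ [H|H]]; [left|right]; intros z Hz; apply (H z); auto. }
 assert (Ho : forall i j, (i < n)%nat -> (j < n)%nat ->
    (exists z z', V (2 + i)%nat z /\ R_gt1 z z' /\ V (2 + j)%nat z') ->
    forall z, V (2 + i)%nat z -> exists z', R_gt1 z z' /\ V (2 + j)%nat z').
 { intros i j Hi Hj [z0 [z1 [H0 [H01 H1]]]] z Hz. unfold Hom in Hh. rewrite sat_Conj in Hh.
   specialize (Hh (Conj (map (HomIJ i) (seq 0 n))) ltac:(apply (in_map (fun i => Conj (map (HomIJ i) (seq 0 n)))); apply in_seq; lia)). rewrite sat_Conj in Hh.
   specialize (Hh (HomIJ i j) ltac:(apply in_map; apply in_seq; lia)). unfold HomIJ in Hh.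
   assert (Hh' : sat R_gt1 V x (Dia2 (And (q i) (Dia (q j)))) -> sat R_gt1 V x (Box2 (Imp (q i) (Dia (q j))))) by exact Hh.
   clear Hh. rename Hh' into Hh. rewrite R_Dia2, R_Box2 in Hh.
   assert (HH : exists z, sat R_gt1 V z (And (q i) (Dia (q j)))).
   { exists z0. rewrite sat_And. split. exact H0. exists z1. split; auto. }
   specialize (Hh HH z Hz). exact Hh. }
 assert (Cells : forall f, good f -> forall i, (i < n)%nat ->
    (forall z, V (2 + i)%nat z -> sat R_gt1 V z f) \/
    (forall z, V (2 + i)%nat z -> ~ sat R_gt1 V z f)).
 { induction f; simpl; intros Hg i Hi.
   - apply Pu; auto.
   - right; auto.
   - destruct Hg as [Hg1 Hg2]. destruct (IHf1 Hg1 i Hi) as [A1|A1].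
     + destruct (IHf2 Hg2 i Hi) as [A2|A2]. left; auto. right; intros z Hz H; apply (A2 z Hz); apply H; apply (A1 z Hz).
     + left. intros z Hz H. exfalso; apply (A1 z Hz); exact H.
   - destruct (classic (exists z0, V (2 + i)%nat z0 /\ exists y, R_gt1 z0 y /\ sat R_gt1 V y f))
       as [[z0 [Hz0 [y [Hy Hyf]]]]|Hn].
     + left. destruct (Cov y) as [j [Hj Hjy]].
       destruct (IHf Hg j Hj) as [Aj|Aj]; [|exfalso; eapply Aj; eauto].
       intros z Hz. destruct (Ho i j Hi Hj ltac:(eauto 6) z Hz) as [z' [Hz' Hz'j]].
       exists z'. split; auto.
     + right. intros z Hz H. apply Hn. eauto. }
 destruct (walk_all V x Ha) as [W1 W2].
 assert (Ch : forall k, exists c, (c < n)%nat /\ exists y, sat R_gt1 V y (Tf (S k)) /\ V (2 + c)%nat y).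
 { intro k. destruct (W1 k) as [y Hy]. destruct (Cov y) as [c [Hc1 Hc2]]. eauto. }
 set (f := fun k => proj1_sig (constructive_indefinite_description _ (Ch k))).
 assert (Hf : forall k, (f k < n)%nat /\ exists y, sat R_gt1 V y (Tf (S k)) /\ V (2 + f k)%nat y).
 { intro k. unfold f. destruct (constructive_indefinite_description _ (Ch k)) as [c Hcc]. simpl. auto. }
 apply (php n f).
 - intros k _. apply Hf.
 - intros j k Hjk _ Heq. destruct (Hf j) as [Hj1 [yj [Hyj1 Hyj2]]].
   destruct (Hf k) as [Hk1 [yk [Hyk1 Hyk2]]]. rewrite Heq in Hyj2.
   destruct (Cells (Tf (S k)) (proj2 (good_Tf k)) (f k) Hk1) as [A|A].
   + apply (W2 j k Hjk yj Hyj1). apply A; auto.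
   + apply (A yk Hyk2 Hyk1).
Qed.
Open Scope R_scope.

Lemma sat_agree {X : Type} (Rel : X -> X -> Prop) (V V' : nat -> X -> Prop) :
  (forall k x, (k < 2)%nat -> (V k x <-> V' k x)) ->
  forall f, good f -> forall x, sat Rel V x f <-> sat Rel V' x f.
Proof. intros HV f. induction f; simpl; intros Hg x.
 - apply HV; auto.
 - tauto.
 - destruct Hg. rewrite IHf1, IHf2 by auto. tauto.
 - split; intros [y [Hy H]]; exists y; split; auto; apply IHf; auto. Qed.

Lemma good_alpha : good alpha.
Proof. unfold alpha. simpl. repeat split; lia. Qed.

Lemma Box2_all {X : Type} (Rel : X -> X -> Prop) V w f :
  (forall z, sat Rel V z f) -> sat Rel V w (Box2 f).
Proof. intro H. unfold Box2. rewrite sat_Box. intros y _. rewrite sat_Box. auto. Qed.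

Definition V0 (n : nat) (x : R) : Prop :=
  match n with O => x = 1/2 | S O => x = 0 | _ => False end.

Lemma model : sat R_gt1 V0 0 alpha.
Proof. apply alpha_sem. unfold AlphaHyps.
 assert (T0 : forall x, sat R_gt1 V0 x (Tf 1) <-> 1 < x <= 3/2).
 { intro x. rewrite Tf1_sem. simpl. split.
   - intros [H1 [y [Hy ->]]]. specialize (H1 (1/2) eq_refl). apply ngt1_iff in H1.
     apply gt1_iff in Hy. destruct Hy; lra.
   - intros Hx. split. intros y ->. apply ngt1_iff. lra. exists 0. split; auto.
     apply gt1_iff. lra. }
 split; [|split; [|split; [|split; [|split]]]].
 - intros y z Hy Hz. simpl in Hy, Hz. apply ngt1_iff. destruct Hy as [->| ->], Hz as [->| ->]; lra.
 - exists (1/2). reflexivity.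
 - exists 0. reflexivity.
 - exists (3/2). apply T0. lra.
 - intros y z Hy Hz. rewrite T0 in Hy, Hz. apply ngt1_iff. lra.
 - exists (7/4). apply TfSS_sem. split; [|split].
   + intros y Hy. change (sat R_gt1 V0 y (Tf 1)) in Hy. rewrite T0 in Hy. apply ngt1_iff. lra.
   + change (~ sat R_gt1 V0 (7/4) (Tf 1)). rewrite T0. lra.
   + exists (1/2). split. apply gt1_iff. lra. simpl. reflexivity.
Qed.

Theorem theorem5p8 :
  exists phi : form,
    ~ Log_gt1_R phi /\
    forall (X : Type) (Rel : X -> X -> Prop),
      finite_type X ->
      (forall psi : form, Log_gt1_R psi -> valid Rel psi) ->
      valid Rel phi.
Proof.
 exists (Neg alpha). split.
 - intro H. apply (H V0 0). apply model.
 - intros X Rel [l Hl] HL V w Ha.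
   set (n := length l).
   set (V' := fun k x => if Nat.ltb k 2 then V k x else nth_error l (k - 2) = Some x).
   pose proof (HL (psi n) (R_side n) V' w) as Hp. apply Hp. clear Hp.
   assert (Hq : forall i x, sat Rel V' x (q i) <-> nth_error l i = Some x).
   { intros i x. unfold q. simpl. unfold V'. simpl. rewrite Nat.sub_0_r. tauto. }
   unfold body. rewrite !sat_And. split; [|split; [|split]].
   + unfold Cover. apply Box2_all. intro z. rewrite sat_Disj.
     destruct (In_nth_error l z (Hl z)) as [i Hi]. exists (q i). split.
     * apply in_map. apply in_seq. assert (i < length l)%nat; [|unfold n; lia].
       apply nth_error_Some. rewrite Hi. discriminate.
     * apply Hq. auto.
   + unfold Pure. rewrite sat_Conj. intros f Hf. apply in_map_iff in Hf.
     destruct Hf as [i [<- _]]. unfold PureI. rewrite sat_And, !sat_Or.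
     split.
     * destruct (classic (exists z, nth_error l i = Some z /\ V 0%nat z)) as [[z [Hz Hv]]|Hn];
       [left|right]; apply Box2_all; intros y Hy; rewrite Hq in Hy.
       -- rewrite Hy in Hz. injection Hz as ->. simpl. unfold V'. simpl. auto.
       -- intro Hv. apply Hn. exists y. split; auto.
     * destruct (classic (exists z, nth_error l i = Some z /\ V 1%nat z)) as [[z [Hz Hv]]|Hn];
       [left|right]; apply Box2_all; intros y Hy; rewrite Hq in Hy.
       -- rewrite Hy in Hz. injection Hz as ->. simpl. unfold V'. simpl. auto.
       -- intro Hv. apply Hn. exists y. split; auto.
   + unfold Hom. rewrite sat_Conj. intros f Hf. apply in_map_iff in Hf.
     destruct Hf as [i [<- _]]. rewrite sat_Conj. intros f Hf. apply in_map_iff in Hf.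
     destruct Hf as [j [<- _]]. unfold HomIJ. intros [y1 [_ [z1 [_ Hz1]]]].
     rewrite sat_And in Hz1. destruct Hz1 as [Hz1 [z2 [Hz12 Hz2]]].
     apply Box2_all. intros z Hz. rewrite Hq in Hz, Hz1. rewrite Hz in Hz1.
     injection Hz1 as ->. exists z2. auto.
   + apply (sat_agree Rel V V'). intros k x Hk. unfold V'.
     destruct (Nat.ltb_spec k 2); [tauto|lia]. apply good_alpha. exact Ha.
Qed.
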